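(* The class of $\curlyvee$-algebras is a proper quasivariety: it is a quasivariety but not a variety (it is not closed under homomorphic images).
   Context: A left regular band is a set with a binary operation $\sqcup$ satisfying $a\sqcup(b\sqcup c)=(a\sqcup b)\sqcup c$, $a\sqcup a=a$, $a\sqcup b=(a\sqcup b)\sqcup a$. On an algebra with operation $\sqcup$ write $a\lesssim b$ iff $b\sqcup a=b$. A $\curlyvee$-algebra is an algebra $(S,\curlyvee)$ with one binary operation such that, defining $a\sqcup b=a\curlyvee(a\curlyvee b)$ for all $a,b\in S$: $(S,\sqcup)$ is a left regular band; $\curlyvee$ is commutative and idempotent; $(a\curlyvee b)\sqcup(a\sqcup b)=a\sqcup b$; $a\sqcup(b\curlyvee c)=(a\sqcup b)\curlyvee(a\sqcup c)$; and for all $a,b,c,d$, if $d\lesssim a$, $d\lesssim b$, $d\lesssim c$, $d\lesssim a\curlyvee b$ and $d\lesssim b\curlyvee c$ then $d\lesssim a\curlyvee c$. *)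

(* Defs.v *)
Definition sqcup {S : Type} (v : S -> S -> S) (a b : S) : S := v a (v a b).

Definition lesssim {S : Type} (op : S -> S -> S) (a b : S) : Prop := op b a = b.

Definition left_regular_band {S : Type} (op : S -> S -> S) : Prop :=
  (forall a b c, op a (op b c) = op (op a b) c) /\
  (forall a, op a a = a) /\
  (forall a b, op a b = op (op a b) a).

Definition vee_algebra (S : Type) (v : S -> S -> S) : Prop :=
  let j := sqcup v in
  left_regular_band j /\
  (forall a b, v a b = v b a) /\
  (forall a, v a a = a) /\
  (forall a b, j (v a b) (j a b) = j a b) /\
  (forall a b c, j a (v b c) = v (j a b) (j a c)) /\
  (forall a b c d,
     lesssim j d a -> lesssim j d b -> lesssim j d c ->
     lesssim j d (v a b) -> lesssim j d (v b c) -> lesssim j d (v a c)).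

Definition is_hom {S T : Type} (opS : S -> S -> S) (opT : T -> T -> T)
  (h : S -> T) : Prop := forall x y, h (opS x y) = opT (h x) (h y).

Definition surjective {S T : Type} (h : S -> T) : Prop := forall t, exists s, h s = t.
Definition injective {S T : Type} (h : S -> T) : Prop := forall x y, h x = h y -> x = y.

(* a filter on an index type I (not required to be proper) *)
Definition is_filter {I : Type} (F : (I -> Prop) -> Prop) : Prop :=
  F (fun _ => True) /\
  (forall X Y : I -> Prop, F X -> (forall i, X i -> Y i) -> F Y) /\
  (forall X Y : I -> Prop, F X -> F Y -> F (fun i => X i /\ Y i)).

Definition alg_class := forall S : Type, (S -> S -> S) -> Prop.

Definition closed_IS (K : alg_class) : Prop :=
  forall (S T : Type) (opS : S -> S -> S) (opT : T -> T -> T) (h : T -> S),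
    is_hom opT opS h -> injective h -> K S opS -> K T opT.

(* closed under isomorphic copies of reduced products (I P_R):
   T with a surjective homomorphism h from the direct product of the A i
   whose kernel is exactly "agreement on an F-large set" *)
Definition closed_IPR (K : alg_class) : Prop :=
  forall (I : Type) (A : I -> Type) (opA : forall i, A i -> A i -> A i)
         (F : (I -> Prop) -> Prop) (T : Type) (opT : T -> T -> T)
         (h : (forall i, A i) -> T),
    is_filter F ->
    (forall i, K (A i) (opA i)) ->
    is_hom (fun f g => fun i => opA i (f i) (g i)) opT h ->
    surjective h ->
    (forall f g, h f = h g <-> F (fun i => f i = g i)) ->
    K T opT.

(* Mal'cev: a class is a quasivariety iff it is closed under I, S and P_R *)
Definition quasivariety (K : alg_class) : Prop := closed_IS K /\ closed_IPR K.

Definition closed_H (K : alg_class) : Prop :=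
  forall (S T : Type) (opS : S -> S -> S) (opT : T -> T -> T) (h : S -> T),
    is_hom opS opT h -> surjective h -> K S opS -> K T opT.

(* Main.v *)
Require Import Defs.

Lemma IS_ok : closed_IS vee_algebra.
Proof.
  intros S T opS opT h Hh Hinj HS.
  unfold vee_algebra, left_regular_band, sqcup, lesssim in *; cbv beta zeta in *.
  destruct HS as [[A [Id0 L]] [C [Id [X [D Q]]]]].
  repeat split; intros.
  - apply Hinj; rewrite !Hh; apply A.
  - apply Hinj; rewrite !Hh; apply Id0.
  - apply Hinj; rewrite !Hh; apply L.
  - apply Hinj; rewrite !Hh; apply C.
  - apply Hinj; rewrite !Hh; apply Id.
  - apply Hinj; rewrite !Hh; apply X.
  - apply Hinj; rewrite !Hh; apply D.
  - match goal with H1 : _, H2 : _, H3 : _, H4 : _, H5 : _ |- _ =>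
      apply (f_equal h) in H1; apply (f_equal h) in H2; apply (f_equal h) in H3;
      apply (f_equal h) in H4; apply (f_equal h) in H5 end.
    repeat rewrite Hh in *.
    apply Hinj; repeat rewrite Hh; apply (Q (h a) (h b) (h c) (h d)); assumption.
Qed.

Lemma IPR_ok : closed_IPR vee_algebra.
Proof.
  intros I A opA F T opT h HF HK Hh Hs Hker.
  destruct HF as [FT [Fup Fand]].
  assert (pw : forall X Y : forall i, A i, (forall i, X i = Y i) -> h X = h Y).
  { intros X Y HXY. apply Hker. apply (Fup (fun _ => True)); auto. }
  assert (Hh' : forall x y, opT (h x) (h y) = h (fun i => opA i (x i) (y i))).
  { intros; rewrite Hh; reflexivity. }
  unfold vee_algebra, left_regular_band, sqcup, lesssim in *; cbv beta zeta in *.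
  repeat split.
  - intros a b c; destruct (Hs a) as [fa <-]; destruct (Hs b) as [fb <-];
    destruct (Hs c) as [fc <-]; rewrite !Hh'; apply pw; intro i;
    destruct (HK i) as [[X _] _]; apply X.
  - intros a; destruct (Hs a) as [fa <-]; rewrite !Hh'; apply pw; intro i;
    destruct (HK i) as [[_ [X _]] _]; apply X.
  - intros a b; destruct (Hs a) as [fa <-]; destruct (Hs b) as [fb <-];
    rewrite !Hh'; apply pw; intro i;
    destruct (HK i) as [[_ [_ X]] _]; apply X.
  - intros a b; destruct (Hs a) as [fa <-]; destruct (Hs b) as [fb <-];
    rewrite !Hh'; apply pw; intro i;
    destruct (HK i) as [_ [X _]]; apply X.
  - intros a; destruct (Hs a) as [fa <-]; rewrite !Hh'; apply pw; intro i;
    destruct (HK i) as [_ [_ [X _]]]; apply X.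
  - intros a b; destruct (Hs a) as [fa <-]; destruct (Hs b) as [fb <-];
    rewrite !Hh'; apply pw; intro i;
    destruct (HK i) as [_ [_ [_ [X _]]]]; apply X.
  - intros a b c; destruct (Hs a) as [fa <-]; destruct (Hs b) as [fb <-];
    destruct (Hs c) as [fc <-]; rewrite !Hh'; apply pw; intro i;
    destruct (HK i) as [_ [_ [_ [_ [X _]]]]]; apply X.
  - intros a b c d; destruct (Hs a) as [fa <-]; destruct (Hs b) as [fb <-];
    destruct (Hs c) as [fc <-]; destruct (Hs d) as [fd <-]; rewrite !Hh'.
    intros H1 H2 H3 H4 H5.
    apply Hker in H1; apply Hker in H2; apply Hker in H3; apply Hker in H4; apply Hker in H5.
    apply Hker.
    pose proof (Fand _ _ H1 (Fand _ _ H2 (Fand _ _ H3 (Fand _ _ H4 H5)))) as H.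
    apply (Fup _ _ H).
    intros i [E1 [E2 [E3 [E4 E5]]]].
    destruct (HK i) as [_ [_ [_ [_ [_ X]]]]]; apply (X (fa i) (fb i) (fc i) (fd i)); assumption.
Qed.

Inductive S6 := s0 | s1 | s2 | s3 | s4 | s5.
Definition v6 (x y : S6) : S6 :=
  match x, y with
  | s0, s0 => s0 | s0, s1 => s0 | s0, s2 => s0 | s0, s3 => s0 | s0, s4 => s1 | s0, s5 => s1
  | s1, s0 => s0 | s1, s1 => s1 | s1, s2 => s0 | s1, s3 => s1 | s1, s4 => s4 | s1, s5 => s4
  | s2, s0 => s0 | s2, s1 => s0 | s2, s2 => s2 | s2, s3 => s2 | s2, s4 => s1 | s2, s5 => s3
  | s3, s0 => s0 | s3, s1 => s1 | s3, s2 => s2 | s3, s3 => s3 | s3, s4 => s4 | s3, s5 => s5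
  | s4, s0 => s1 | s4, s1 => s4 | s4, s2 => s1 | s4, s3 => s4 | s4, s4 => s4 | s4, s5 => s4
  | s5, s0 => s1 | s5, s1 => s4 | s5, s2 => s3 | s5, s3 => s5 | s5, s4 => s4 | s5, s5 => s5
  end.

Inductive T4 := t0 | t1 | t2 | t3.
Definition v4 (x y : T4) : T4 :=
  match x, y with
  | t0, _ => t0 | _, t0 => t0
  | t1, t1 => t1 | t1, t2 => t1 | t1, t3 => t2
  | t2, t1 => t1 | t2, t2 => t2 | t2, t3 => t3
  | t3, t1 => t2 | t3, t2 => t3 | t3, t3 => t3
  end.

Definition p6 (x : S6) : T4 :=
  match x with s0 => t0 | s1 => t0 | s2 => t1 | s3 => t2 | s4 => t0 | s5 => t3 end.

Lemma S6_va : vee_algebra S6 v6.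
Proof.
  unfold vee_algebra, left_regular_band, sqcup, lesssim; cbv beta zeta.
  repeat split.
  - intros [] [] []; reflexivity.
  - intros []; reflexivity.
  - intros [] []; reflexivity.
  - intros [] []; reflexivity.
  - intros []; reflexivity.
  - intros [] []; reflexivity.
  - intros [] [] []; reflexivity.
  - intros [] [] [] []; simpl; intros; try reflexivity; discriminate.
Qed.

Lemma T4_not : ~ vee_algebra T4 v4.
Proof.
  unfold vee_algebra, left_regular_band, sqcup, lesssim; cbv beta zeta.
  intros [_ [_ [_ [_ [_ Q]]]]].
  specialize (Q t1 t0 t3 t1 eq_refl eq_refl eq_refl eq_refl eq_refl).
  discriminate.
Qed.

Theorem theorem3p11 :
  quasivariety vee_algebra /\ ~ closed_H vee_algebra.
Proof.
  split.
  - split; [exact IS_ok | exact IPR_ok].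
  - intro H. apply T4_not.
    apply (H S6 T4 v6 v4 p6).
    + intros [] []; reflexivity.
    + intros []; [exists s0 | exists s2 | exists s3 | exists s5]; reflexivity.
    + exact S6_va.
Qed.
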